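(* Let $\mathcal{L}$ and $\mathcal{L}'$ be lattices and $f,g:\mathbb{N}\to\mathbb{N}$. If $\mathcal{L}$ is $\Theta(f(n))$ and $\mathcal{L}'$ is $\Theta(g(n))$, then the vertical sum $\mathcal{L}\oplus_v\mathcal{L}'$ and the horizontal sum $\mathcal{L}\oplus_h\mathcal{L}'$ are both $\Theta(f(n)+g(n))$.
   Context: A lattice means a partially ordered set $(\mathcal{L},\sqsubseteq)$ with least element $\bot$ in which any two elements have a least upper bound $\sqcup$; $\bigsqcup S$ denotes the least upper bound of a finite set ($\bigsqcup\emptyset=\bot$). Let $\mathcal{L}\uplus\mathcal{L}'=\{0\}\times\mathcal{L}\cup\{1\}\times\mathcal{L}'$. The vertical sum $\mathcal{L}\oplus_v\mathcal{L}'$ has elements $\mathcal{L}\uplus\mathcal{L}'$ with $\ell\sqsubseteq\ell'$ iff either $\ell=(0,\jmath)$ and $\ell'=(1,\jmath')$, or $\ell=(i,\jmath)$, $\ell'=(i,\jmath')$ and $\jmath\sqsubseteq\jmath'$ (i.e. $\mathcal{L}'$ placed on top of $\mathcal{L}$). The horizontal sum $\mathcal{L}\oplus_h\mathcal{L}'$ has elements $\{0,1\}\cup(\mathcal{L}\uplus\mathcal{L}')$ (with $0,1$ fresh elements) and $\ell\sqsubseteq\ell'$ iff $\ell=0$, or $\ell'=1$, or $\ell=(i,\jmath)$, $\ell'=(i,\jmath')$ and $\jmath\sqsubseteq\jmath'$ (i.e. $\mathcal{L}$ and $\mathcal{L}'$ side by side with a new bottom $0$ and new top $1$). The closure set of a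 finite $S$ is $C(S)=\{\bigsqcup S' : S'\subseteq S\}$, $CS_{\mathcal{L}}(n)=\max\{|C(S)| : S\subseteq\mathcal{L}\text{ finite}, |S|\le n\}$. For $f,g:\mathbb{N}\to\mathbb{N}$, $f$ is $O(g)$ (resp. $\Omega(g)$) iff there exist $N_0\in\mathbb{N}$ and rational $C>0$ with $f(n)\le Cg(n)$ (resp. $f(n)\ge Cg(n)$) for all $n\ge N_0$; $\Theta$ means both. A lattice is $\Theta(f(n))$ iff its $CS$ is. *)

(* Defs.v *)
From mathcomp Require Import all_boot all_order all_algebra.
From Stdlib Require Import ClassicalEpsilon.
Set Implicit Arguments. Unset Strict Implicit. Unset Printing Implicit Defensive.
Import Order.TTheory GRing.Theory Num.Theory.

Definition is_lub {T : Type} (le : T -> T -> Prop) (x y z : T) : Prop :=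
  le x z /\ le y z /\ (forall w, le x w -> le y w -> le z w).

Definition is_lattice {T : Type} (le : T -> T -> Prop) (bot : T) : Prop :=
  [/\ (forall x, le x x),
      (forall x y, le x y -> le y x -> x = y),
      (forall x y z, le x y -> le y z -> le x z),
      (forall x, le bot x)
    & (forall x y, exists z, is_lub le x y z)].

Definition join {T : Type} (le : T -> T -> Prop) (bot : T) (x y : T) : T :=
  epsilon (inhabits bot) (is_lub le x y).

Definition bigjoin {T : Type} (le : T -> T -> Prop) (bot : T) (s : seq T) : T :=
  foldr (join le bot) bot s.

Fixpoint powerseq {T : Type} (s : seq T) : seq (seq T) :=
  match s with
  | [::] => [:: [::]]
  | x :: s' => let p := powerseq s' in p ++ map (cons x) p
  end.

Definition closure_card {T : eqType} (le : T -> T -> Prop) (bot : T) (S : seq T) : nat :=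
  size (undup (map (bigjoin le bot) (powerseq S))).

Definition CS_attained {T : eqType} (le : T -> T -> Prop) (bot : T) (n k : nat) : bool :=
  if excluded_middle_informative
       (exists S : seq T, [/\ uniq S, size S <= n & closure_card le bot S = k])
  then true else false.

(* CS_L(n) = max { |C(S)| : |S| <= n }; since |C(S)| <= 2^|S| <= 2^n the
   maximum ranges over k <= 2^n. *)
Definition CS {T : eqType} (le : T -> T -> Prop) (bot : T) (n : nat) : nat :=
  \max_(k < (2 ^ n).+1 | CS_attained le bot n k) k.

Definition bigO (f g : nat -> nat) : Prop :=
  exists (N0 : nat) (C : rat), (0 < C)%R /\
    forall n, (N0 <= n)%N -> (((f n)%:R : rat) <= C * (g n)%:R)%R.

Definition bigOmega (f g : nat -> nat) : Prop :=
  exists (N0 : nat) (C : rat), (0 < C)%R /\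
    forall n, (N0 <= n)%N -> (C * (g n)%:R <= ((f n)%:R : rat))%R.

Definition bigTheta (f g : nat -> nat) : Prop := bigO f g /\ bigOmega f g.

(* L ⊎ L' is the sum type T + T' (inl = (0,_), inr = (1,_)). *)
Definition vle {T T' : Type} (le : T -> T -> Prop) (le' : T' -> T' -> Prop)
  (x y : T + T') : Prop :=
  match x, y with
  | inl a, inl b => le a b
  | inr a, inr b => le' a b
  | inl _, inr _ => True
  | inr _, inl _ => False
  end.

Definition vbot {T T' : Type} (bot : T) : T + T' := inl bot.

(* Horizontal sum carrier: bool + (T + T'), where inl false is the fresh
   bottom 0 and inl true is the fresh top 1. *)
Definition h0 {T T' : Type} : bool + (T + T') := inl false.
Definition h1 {T T' : Type} : bool + (T + T') := inl true.

Definition hle {T T' : Type} (le : T -> T -> Prop) (le' : T' -> T' -> Prop)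
  (x y : bool + (T + T')) : Prop :=
  x = h0 \/ y = h1 \/
  match x, y with
  | inr (inl a), inr (inl b) => le a b
  | inr (inr a), inr (inr b) => le' a b
  | _, _ => False
  end.

(* Main.v *)
Require Import Defs.
From mathcomp Require Import all_boot all_order all_algebra.
From Stdlib Require Import ClassicalEpsilon.
From mathcomp Require Import lra zify.
Set Implicit Arguments. Unset Strict Implicit. Unset Printing Implicit Defensive.
Import Order.TTheory GRing.Theory Num.Theory.


Lemma joinE (T : Type) (le : T -> T -> Prop) (bot : T) x y z :
  (forall a b, le a b -> le b a -> a = b) -> is_lub le x y z -> join le bot x y = z.
Proof.
move=> antis Hz; rewrite /join.
have := epsilon_spec (inhabits bot) (is_lub le x y) (ex_intro _ z Hz).
set e := epsilon _ _ => -[h1 [h2 h3]]; case: Hz => [k1 [k2 k3]].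
by apply: antis; [apply: h3 | apply: k3].
Qed.

Lemma nil_in_powerseq (T : eqType) (S : seq T) : [::] \in powerseq S.
Proof. by elim: S => [|x s IH] //=; rewrite mem_cat IH. Qed.

Lemma powerseq_map (A B : Type) (f : A -> B) (S : seq A) :
  powerseq (map f S) = map (map f) (powerseq S).
Proof.
elim: S => [|x s IH] //=; rewrite IH map_cat -!map_comp; congr (_ ++ _).
Qed.

Lemma powerseq_pmap (A B : eqType) (f : A -> option B) (S : seq A) s :
  s \in powerseq S -> pmap f s \in powerseq (pmap f S).
Proof.
elim: S s => [|x S IH] s /=; first by rewrite inE => /eqP ->.
rewrite mem_cat => /orP [/IH H|/mapP [s' /IH H ->]] /=.
  by case: (f x) => [y|] //=; rewrite mem_cat H.
by case: (f x) => [y|] //=; rewrite mem_cat map_f ?orbT.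
Qed.

Lemma size_powerseq (T : Type) (S : seq T) : size (powerseq S) = 2 ^ size S.
Proof. by elim: S => [|x s IH] //=; rewrite size_cat size_map IH expnS mul2n addnn. Qed.

Lemma undup_sub (A : eqType) (X Y : seq A) :
  {subset X <= Y} -> size (undup X) <= size (undup Y).
Proof.
move=> sub; apply: uniq_leq_size; first exact: undup_uniq.
by move=> x; rewrite !mem_undup; apply: sub.
Qed.

Lemma undup_cat_le (A : eqType) (X Y : seq A) :
  size (undup (X ++ Y)) <= size (undup X) + size (undup Y).
Proof.
rewrite -size_cat; apply: uniq_leq_size; first exact: undup_uniq.
by move=> x; rewrite mem_cat !mem_undup mem_cat.
Qed.

Lemma undup_map_le (A B : eqType) (g : A -> B) (X : seq A) :
  size (undup (map g X)) <= size (undup X).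
Proof.
apply: (@leq_trans (size (undup (map g (undup X))))).
  apply: undup_sub => y /mapP [x xX ->]; apply: map_f; by rewrite mem_undup.
by rewrite -[X in _ <= X](size_map g) size_undup.
Qed.

Lemma lower_gen (A B : eqType) (FA : seq A -> A) (FB : seq B -> B) (a0 : A)
  (i : A -> B) (S : seq A) :
  FA [::] = a0 -> (forall s, s != [::] -> FB (map i s) = i (FA s)) ->
  injective (fun z => if z == a0 then FB [::] else i z) ->
  size (undup (map FA (powerseq S))) <= size (undup (map FB (powerseq (map i S)))).
Proof.
move=> F0 Fi inj.
set psi := (fun z => if z == a0 then FB [::] else i z).
rewrite -(size_map psi); apply: uniq_leq_size.
  by rewrite (map_inj_uniq inj) undup_uniq.
move=> y /mapP [x]; rewrite mem_undup => /mapP [s sS ->] ->.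
rewrite mem_undup /psi; case: eqP => [_|ne].
  by apply: map_f; apply: nil_in_powerseq.
have sn : s != [::] by apply/eqP => E; apply: ne; rewrite E.
rewrite -Fi // powerseq_map; apply: map_f; exact: map_f.
Qed.

Lemma closure_le2n (T : eqType) le (bot : T) S : closure_card le bot S <= 2 ^ size S.
Proof. by rewrite /closure_card -size_powerseq -(size_map (bigjoin le bot)) size_undup. Qed.

Lemma CS_ge (T : eqType) le (bot : T) n S :
  uniq S -> size S <= n -> closure_card le bot S <= CS le bot n.
Proof.
move=> uS sS; rewrite /CS.
have lt : closure_card le bot S < (2 ^ n).+1.
  by rewrite ltnS (leq_trans (closure_le2n _ _ _)) // leq_pexp2l.
apply: (@leq_bigmax_cond _ _ (fun k : 'I__ => nat_of_ord k) (Ordinal lt)).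
rewrite /CS_attained; case: excluded_middle_informative => // [[]].
by exists S.
Qed.

Lemma CS_le (T : eqType) le (bot : T) n B :
  (forall S, uniq S -> size S <= n -> closure_card le bot S <= B) -> CS le bot n <= B.
Proof.
move=> H; rewrite /CS; apply/bigmax_leqP => k.
rewrite /CS_attained; case: excluded_middle_informative => // -[S [uS sS E]] _.
rewrite -E; exact: H.
Qed.

Lemma CS_pos (T : eqType) le (bot : T) n : 0 < CS le bot n.
Proof.
apply: leq_trans (CS_ge le bot (S := [::]) _ _) => //.
Qed.

Lemma lubL (T : Type) (le : T -> T -> Prop) bot : is_lattice le bot ->
  forall a b, is_lub le a b (join le bot a b).
Proof.
case=> _ _ _ _ ex a b; rewrite /join; case: (ex a b) => z Hz.
exact: (epsilon_spec (inhabits bot) (is_lub le a b) (ex_intro _ z Hz)).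
Qed.

Lemma join_bot (T : Type) (le : T -> T -> Prop) bot : is_lattice le bot ->
  forall a, join le bot a bot = a.
Proof.
move=> HL a; case: (HL) => refl anti _ lb _.
apply: joinE; first exact: anti.
split; first exact: refl.
split; first exact: lb.
by [].

Qed.

Lemma vle_anti (T T' : Type) (le : T -> T -> Prop) bot le' (bot' : T') :
  is_lattice le bot -> is_lattice le' bot' ->
  forall x y, vle le le' x y -> vle le le' y x -> x = y.
Proof.
case=> _ a1 _ _ _; case=> _ a2 _ _ _.
by case=> [x|x] [y|y] //= H1 H2; [rewrite (a1 _ _ H1 H2)|rewrite (a2 _ _ H1 H2)].
Qed.


Lemma vjoin (T T' : Type) (le : T -> T -> Prop) bot le' (bot' : T') :
  is_lattice le bot -> is_lattice le' bot' ->
  [/\ forall a b, join (vle le le') (vbot bot) (inl a) (inl b) = inl (join le bot a b),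
      forall a b, join (vle le le') (vbot bot) (inl a) (inr b) = inr b,
      forall a b, join (vle le le') (vbot bot) (inr b) (inl a) = inr b
    & forall a b, join (vle le le') (vbot bot) (inr a) (inr b) = inr (join le' bot' a b)].
Proof.
move=> HL HL'; have anti := vle_anti HL HL'.
case: (HL) => r1 _ _ _ _; case: (HL') => r2 _ _ _ _.
split=> a b; apply: joinE => //.
- case: (lubL HL a b) => h1 [h2 h3]; split => //; split => //.
  by case=> [w|w] //=; apply: h3.
- by split => //=; split => //=; case.
- by split => //=; split => //=; case.
- case: (lubL HL' a b) => h1 [h2 h3]; split => //; split => //.
  by case=> [w|w] //=; apply: h3.
Qed.

Definition isRv (T T' : Type) (x : T + T') := if x is inr _ then true else false.
Definition pLv (T T' : Type) (x : T + T') := if x is inl a then Some a else None.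
Definition pRv (T T' : Type) (x : T + T') := if x is inr a then Some a else None.

Lemma noR_pmap (T T' : Type) (s : seq (T + T')) : ~~ has (@isRv T T') s -> pmap (@pRv T T') s = [::].
Proof. by elim: s => [|[x|x] s IH] //= H; apply: IH. Qed.

Lemma bjv (T T' : Type) (le : T -> T -> Prop) bot le' (bot' : T') :
  is_lattice le bot -> is_lattice le' bot' ->
  forall s, bigjoin (vle le le') (vbot bot) s =
   if has (@isRv T T') s then inr (bigjoin le' bot' (pmap (@pRv T T') s))
   else inl (bigjoin le bot (pmap (@pLv T T') s)).
Proof.
move=> HL HL'; case: (vjoin HL HL') => jLL jLR jRL jRR.
elim=> [|x s IH] //=; rewrite IH.
case: x => [a|b] /=; case hR: (has (@isRv T T') s) => //=.
rewrite noR_pmap ?hR //= join_bot //.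
Qed.

Lemma v_upper (T T' : eqType) (le : T -> T -> Prop) bot le' (bot' : T') :
  is_lattice le bot -> is_lattice le' bot' -> forall S,
  closure_card (vle le le') (vbot bot) S <=
  closure_card le bot (pmap (@pLv T T') S) + closure_card le' bot' (pmap (@pRv T T') S).
Proof.
move=> HL HL' S; rewrite /closure_card.
apply: leq_trans (undup_sub (Y := map inl (map (bigjoin le bot) (powerseq (pmap (@pLv T T') S)))
   ++ map inr (map (bigjoin le' bot') (powerseq (pmap (@pRv T T') S)))) _) _.
  move=> y /mapP [s sS ->]; rewrite (bjv HL HL') mem_cat.
  case: has.
    by rewrite map_f ?orbT // map_f // powerseq_pmap.
  by rewrite map_f // map_f // powerseq_pmap.
apply: leq_trans (undup_cat_le _ _) _.
by apply: leq_add; apply: undup_map_le.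
Qed.

Lemma CS_v_up (T T' : eqType) (le : T -> T -> Prop) bot le' (bot' : T') :
  is_lattice le bot -> is_lattice le' bot' -> forall n,
  CS (vle le le') (vbot bot) n <= CS le bot n + CS le' bot' n.
Proof.
move=> HL HL' n; apply: CS_le => S uS sS.
apply: leq_trans (v_upper HL HL' S) _.
apply: leq_add; apply: CS_ge.
- by apply: (pmap_uniq (g := inl)) => // -[].
- by rewrite size_pmap (leq_trans (count_size _ _)).
- by apply: (pmap_uniq (g := inr)) => // -[].
- by rewrite size_pmap (leq_trans (count_size _ _)).
Qed.

Lemma CS_v_lo (T T' : eqType) (le : T -> T -> Prop) bot le' (bot' : T') :
  is_lattice le bot -> is_lattice le' bot' -> forall n,
  CS le bot n <= CS (vle le le') (vbot bot) n /\ CS le' bot' n <= CS (vle le le') (vbot bot) n.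
Proof.
move=> HL HL' n; split; apply: CS_le => S uS sS.
  apply: leq_trans (CS_ge (S := map inl S) _ _ _ _); last 2 first.
  - by rewrite map_inj_uniq // => x y [].
  - by rewrite size_map.
  rewrite /closure_card; apply: (lower_gen (a0 := bot)) => //.
    move=> s _; rewrite (bjv HL HL').
    have -> : has (@isRv T T') (map inl s) = false by elim: s.
    by congr inl; elim: s => //= x s ->.
  by move=> x y /=; case: eqP => [->|_]; case: eqP => [->|_] // [].
apply: leq_trans (CS_ge (S := map inr S) _ _ _ _); last 2 first.
- by rewrite map_inj_uniq // => x y [].
- by rewrite size_map.
rewrite /closure_card; apply: (lower_gen (a0 := bot')) => //.
  case=> // a s _; rewrite (bjv HL HL') /=.
  by congr inr; congr (join _ _ a _); elim: s => //= x s ->.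
by move=> x y /=; case: eqP => [->|_]; case: eqP => [->|_] // [].
Qed.

Definition hm (T T' : Type) (le : T -> T -> Prop) (le' : T' -> T' -> Prop)
  (x y : bool + (T + T')) : Prop :=
  match x, y with
  | inl false, _ => True
  | _, inl true => True
  | inr (inl a), inr (inl b) => le a b
  | inr (inr a), inr (inr b) => le' a b
  | _, _ => False
  end.

Lemma hleE (T T' : Type) (le : T -> T -> Prop) (le' : T' -> T' -> Prop) x y :
  hle le le' x y <-> hm le le' x y.
Proof.
rewrite /hle /h0 /h1; split.
  by case: x => [[]|[a|a]]; case: y => [[]|[b|b]] //= [] // [].
by case: x => [[]|[a|a]]; case: y => [[]|[b|b]] //=; auto.
Qed.


Lemma hle_anti (T T' : Type) (le : T -> T -> Prop) bot le' (bot' : T') :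
  is_lattice le bot -> is_lattice le' bot' ->
  forall x y, hle le le' x y -> hle le le' y x -> x = y.
Proof.
case=> _ a1 _ _ _; case=> _ a2 _ _ _ x y /hleE H1 /hleE H2.
move: H1 H2; case: x => [[]|[a|a]]; case: y => [[]|[b|b]] //= H1 H2.
  by rewrite (a1 _ _ H1 H2).
by rewrite (a2 _ _ H1 H2).
Qed.

Lemma hle_refl (T T' : Type) (le : T -> T -> Prop) bot le' (bot' : T') :
  is_lattice le bot -> is_lattice le' bot' -> forall x, hle le le' x x.
Proof.
case=> r1 _ _ _ _; case=> r2 _ _ _ _ x; apply/hleE.
by case: x => [[]|[a|a]] //=.
Qed.

Definition is1 (T T' : Type) (x : bool + (T + T')) := if x is inl true then true else false.
Definition isL (T T' : Type) (x : bool + (T + T')) := if x is inr (inl _) then true else false.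
Definition isR (T T' : Type) (x : bool + (T + T')) := if x is inr (inr _) then true else false.
Definition pL (T T' : Type) (x : bool + (T + T')) := if x is inr (inl a) then Some a else None.
Definition pR (T T' : Type) (x : bool + (T + T')) := if x is inr (inr a) then Some a else None.

Lemma noL (T T' : Type) (s : seq (bool + (T + T'))) : has (@isL T T') s = false -> pmap (@pL T T') s = [::].
Proof. by elim: s => [|[x|[x|x]] s IH] //= H; apply: IH. Qed.
Lemma noR (T T' : Type) (s : seq (bool + (T + T'))) : has (@isR T T') s = false -> pmap (@pR T T') s = [::].
Proof. by elim: s => [|[x|[x|x]] s IH] //= H; apply: IH. Qed.

Lemma bjh (T T' : Type) (le : T -> T -> Prop) bot le' (bot' : T') :
  is_lattice le bot -> is_lattice le' bot' ->
  forall s, bigjoin (hle le le') h0 s =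
   if has (@is1 T T') s || (has (@isL T T') s && has (@isR T T') s) then h1
   else if has (@isL T T') s then inr (inl (bigjoin le bot (pmap (@pL T T') s)))
   else if has (@isR T T') s then inr (inr (bigjoin le' bot' (pmap (@pR T T') s)))
   else h0.
Proof.
move=> HL HL'.
have anti := hle_anti HL HL'; have refl := hle_refl HL HL'.
have J0x : forall x, join (hle le le') h0 h0 x = x.
  move=> x; apply: joinE => //; split; first by apply/hleE.
  by split.
have Jx0 : forall x, join (hle le le') h0 x h0 = x.
  move=> x; apply: joinE => //; split => //; split; first by apply/hleE.
  by [].
have J1x : forall x, join (hle le le') h0 h1 x = h1.
  move=> x; apply: joinE => //; split => //; split; first by apply/hleE; case: x => [[]|[]].
  by [].
have Jx1 : forall x, join (hle le le') h0 x h1 = h1.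
  move=> x; apply: joinE => //; split; first by apply/hleE; case: x => [[]|[]].
  by split.
have JLL : forall a b, join (hle le le') h0 (inr (inl a)) (inr (inl b)) = inr (inl (join le bot a b)).
  move=> a b; case: (lubL HL a b) => k1 [k2 k3].
  apply: joinE => //; split; first by apply/hleE.
  split; first by apply/hleE.
  by move=> w /hleE H1 /hleE H2; apply/hleE; move: H1 H2; case: w => [[]|[w|w]] //=; apply: k3.
have JRR : forall a b, join (hle le le') h0 (inr (inr a)) (inr (inr b)) = inr (inr (join le' bot' a b)).
  move=> a b; case: (lubL HL' a b) => k1 [k2 k3].
  apply: joinE => //; split; first by apply/hleE.
  split; first by apply/hleE.
  by move=> w /hleE H1 /hleE H2; apply/hleE; move: H1 H2; case: w => [[]|[w|w]] //=; apply: k3.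
have JLR : forall a b, join (hle le le') h0 (inr (inl a)) (inr (inr b)) = h1.
  move=> a b; apply: joinE => //; split; first by apply/hleE.
  split; first by apply/hleE.
  by move=> w /hleE H1 /hleE H2; apply/hleE; move: H1 H2; case: w => [[]|[w|w]] //=.
have JRL : forall a b, join (hle le le') h0 (inr (inr b)) (inr (inl a)) = h1.
  move=> a b; apply: joinE => //; split; first by apply/hleE.
  split; first by apply/hleE.
  by move=> w /hleE H1 /hleE H2; apply/hleE; move: H1 H2; case: w => [[]|[w|w]] //=.
elim=> [|x s IH] //=; rewrite IH.
case: x => [[]|[a|b]] /=.
- by rewrite J1x.
- by rewrite J0x.
- case h1: (has (@is1 T T') s); case hL: (has (@isL T T') s);
    case hR: (has (@isR T T') s) => /=; rewrite ?Jx1 ?JLL ?JLR //.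
  by rewrite noL // Jx0 /= join_bot.
- case h1: (has (@is1 T T') s); case hL: (has (@isL T T') s);
    case hR: (has (@isR T T') s) => /=; rewrite ?Jx1 ?JRR ?JRL //.
  by rewrite noR // Jx0 /= join_bot.
Qed.

Lemma CS_h_up (T T' : eqType) (le : T -> T -> Prop) bot le' (bot' : T') :
  is_lattice le bot -> is_lattice le' bot' -> forall n,
  CS (hle le le') h0 n <= 2 + (CS le bot n + CS le' bot' n).
Proof.
move=> HL HL' n; apply: CS_le => S uS sS.
set S0 := pmap (@pL T T') S; set S1 := pmap (@pR T T') S.
apply: (@leq_trans (size (undup ([:: h0; h1] ++
   (map (fun a => inr (inl a)) (map (bigjoin le bot) (powerseq S0))
   ++ map (fun a => inr (inr a)) (map (bigjoin le' bot') (powerseq S1))))))).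
  rewrite /closure_card; apply: undup_sub.
  move=> y /mapP [s sS' ->]; rewrite (bjh HL HL') !mem_cat.
  case: ifP => _; first by rewrite !inE eqxx orbT.
  case: ifP => _; first by rewrite map_f ?orbT // map_f // powerseq_pmap.
  case: ifP => _; first by rewrite (map_f (fun a => inr (inr a))) ?orbT // map_f // powerseq_pmap.
  by rewrite !inE eqxx.
apply: leq_trans (undup_cat_le _ _) _.
apply: leq_add; first by rewrite (leq_trans (size_undup _)).
apply: leq_trans (undup_cat_le _ _) _.
apply: leq_add; apply: leq_trans (undup_map_le _ _) _; apply: CS_ge.
- by apply: (pmap_uniq (g := fun a => inr (inl a))) => // -[[]|[]].
- by rewrite size_pmap (leq_trans (count_size _ _)).
- by apply: (pmap_uniq (g := fun a => inr (inr a))) => // -[[]|[]].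
- by rewrite size_pmap (leq_trans (count_size _ _)).
Qed.

Lemma CS_h_lo (T T' : eqType) (le : T -> T -> Prop) bot le' (bot' : T') :
  is_lattice le bot -> is_lattice le' bot' -> forall n,
  CS le bot n <= CS (hle le le') h0 n /\ CS le' bot' n <= CS (hle le le') h0 n.
Proof.
move=> HL HL' n; split; apply: CS_le => S uS sS.
  apply: leq_trans (CS_ge (S := map (fun a => inr (inl a)) S) _ _ _ _); last 2 first.
  - by rewrite map_inj_uniq // => x y [].
  - by rewrite size_map.
  rewrite /closure_card; apply: (lower_gen (a0 := bot)) => //.
    case=> // a s _; rewrite (bjh HL HL') /=.
    have -> : has (@is1 T T') (map (fun a => inr (inl a)) s) = false by elim: s.
    have -> : has (@isR T T') (map (fun a => inr (inl a)) s) = false by elim: s.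
    by rewrite /=; congr (inr (inl _)); congr (join _ _ a _); elim: s => //= x s ->.
  by move=> x y /=; case: eqP => [->|_]; case: eqP => [->|_] // [].
apply: leq_trans (CS_ge (S := map (fun a => inr (inr a)) S) _ _ _ _); last 2 first.
- by rewrite map_inj_uniq // => x y [].
- by rewrite size_map.
rewrite /closure_card; apply: (lower_gen (a0 := bot')) => //.
  case=> // a s _; rewrite (bjh HL HL') /=.
  have -> : has (@is1 T T') (map (fun a => inr (inr a)) s) = false by elim: s.
  have -> : has (@isL T T') (map (fun a => inr (inr a)) s) = false by elim: s.
  by rewrite /=; congr (inr (inr _)); congr (join _ _ a _); elim: s => //= x s ->.
by move=> x y /=; case: eqP => [->|_]; case: eqP => [->|_] // [].
Qed.

Lemma theta_comb (h a b f g : nat -> nat) :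
  (forall n, h n <= 3 * (a n + b n)) -> (forall n, a n <= h n) ->
  (forall n, b n <= h n) -> bigTheta a f -> bigTheta b g ->
  bigTheta h (fun n => f n + g n).
Proof.
move=> Hup Ha Hb [[N1 [C1 [C1p HC1]]] [N2 [c1 [c1p Hc1]]]]
  [[N3 [C2 [C2p HC2]]] [N4 [c2 [c2p Hc2]]]].
split.
  exists (maxn N1 N3), (3 * (C1 + C2))%R; split; first lra.
  move=> n; rewrite geq_max => /andP [n1 n3].
  have := HC1 n n1; have := HC2 n n3.
  have : ((h n)%:R <= 3 * ((a n)%:R + (b n)%:R) :> rat)%R.
    by rewrite -natrD -(natrM _ 3) ler_nat.
  have f0 : (0 <= (f n)%:R :> rat)%R by [].
  have g0 : (0 <= (g n)%:R :> rat)%R by [].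
  rewrite natrD; nra.
exists (maxn N2 N4), (Num.min c1 c2 / 2)%R; split.
  by rewrite divr_gt0 // lt_min c1p c2p.
move=> n; rewrite geq_max => /andP [n2 n4].
have := Hc1 n n2; have := Hc2 n n4.
have : ((a n)%:R + (b n)%:R <= 2 * (h n)%:R :> rat)%R.
  by rewrite -natrD -(natrM _ 2) ler_nat mul2n -addnn leq_add.
have f0 : (0 <= (f n)%:R :> rat)%R by [].
have g0 : (0 <= (g n)%:R :> rat)%R by [].
have m1 : (Num.min c1 c2 <= c1)%R by rewrite ge_min lexx.
have m2 : (Num.min c1 c2 <= c2)%R by rewrite ge_min lexx orbT.
have mf := ler_wpM2r f0 m1. have mg := ler_wpM2r g0 m2.
rewrite natrD; lra.
Qed.

Theorem mainTheorem5 (T T' : eqType)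
  (le : T -> T -> Prop) (bot : T) (le' : T' -> T' -> Prop) (bot' : T')
  (HL : is_lattice le bot) (HL' : is_lattice le' bot')
  (f g : nat -> nat)
  (Hf : bigTheta (CS le bot) f) (Hg : bigTheta (CS le' bot') g) :
  bigTheta (CS (vle le le') (vbot bot)) (fun n => f n + g n) /\
  bigTheta (CS (hle le le') h0) (fun n => f n + g n).
Proof.
split; apply: (theta_comb _ _ _ Hf Hg).
- move=> n; apply: leq_trans (CS_v_up HL HL' n) _; exact: leq_pmull.
- by move=> n; case: (CS_v_lo HL HL' n).
- by move=> n; case: (CS_v_lo HL HL' n).
- move=> n; apply: leq_trans (CS_h_up HL HL' n) _.
  have := CS_pos le bot n; have := CS_pos le' bot' n; lia.
- by move=> n; case: (CS_h_lo HL HL' n).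
- by move=> n; case: (CS_h_lo HL HL' n).
Qed.
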